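(* Let $[\mathbf{K}_0]=\{[\mathbf{K}_0(\mathbf{x})],\mathbf{x}\in D\}$ be any random field in $\mathcal{C}^+_n$ and let $[\mathbf{K}]$ be defined for all $\mathbf{x}\in D$ by $$[\mathbf{K}(\mathbf{x})]=\frac{1}{1+\varepsilon}[\underline L(\mathbf{x})]^T\{\varepsilon[I_n]+[\mathbf{K}_0(\mathbf{x})]\}[\underline L(\mathbf{x})].$$ Then: (i) for all $\mathbf{x}\in D$, $\|\mathbf{K}(\mathbf{x})\|_F\le \frac{\underline k_1}{1+\varepsilon}(\sqrt{n}\,\varepsilon+\|\mathbf{K}_0(\mathbf{x})\|_F)$ almost surely; (ii) for all $\mathbf{z}\in\mathbb{R}^n$ and all $\mathbf{x}\in D$, $\underline k_\varepsilon\|\mathbf{z}\|_2^2\le\langle[\mathbf{K}(\mathbf{x})]\mathbf{z},\mathbf{z}\rangle_2$ almost surely, where $\underline k_\varepsilon=\underline k_0\,\varepsilon/(1+\varepsilon)$ is a positive constant independent of $\mathbf{x}$; (iii) for all $\mathbf{x}\in D$, $\|[\mathbf{K}(\mathbf{x})]^{-1}\|_F\le\frac{\sqrt{n}(1+\varepsilon)}{\varepsilon}\,\mathrm{tr}([\underline K(\mathbf{x})]^{-1})$ almost surely; consequently, for every integer $p\ge1$ and all $\mathbf{x}\in D$, $E\{\|[\mathbf{K}(\mathbf{x})]^{-1}\|_F^p\}<+\infty$ (in particular $\{[\mathbf{K}(\mathbf{x})]^{-1},\mathbf{x}\in D\}$ is a second-order random field).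
   Context: Let $d\ge1$, $n\ge1$ be integers and $D\subset\mathbb{R}^d$ a bounded open domain. $\mathbb{M}_n^+(\mathbb{R})$ denotes the set of symmetric positive-definite real $n\times n$ matrices, $\|\cdot\|_F$ the Frobenius norm, $\|\cdot\|_2$ and $\langle\cdot,\cdot\rangle_2$ the Euclidean norm and inner product, $[I_n]$ the identity matrix. $\mathcal{C}^+_n$ is the set of all random fields $\{[\mathbf{K}(\mathbf{x})],\mathbf{x}\in D\}$ defined on a probability space $(\Theta,\mathcal{T},\mathcal{P})$ with values in $\mathbb{M}_n^+(\mathbb{R})$. Let $\mathbf{x}\mapsto[\underline K(\mathbf{x})]$ be a function from $D$ into $\mathbb{M}_n^+(\mathbb{R})$ such that for all $\mathbf{x}\in D$ and $\mathbf{z}\in\mathbb{R}^n$, $\underline k_0\|\mathbf{z}\|_2^2\le\langle[\underline K(\mathbf{x})]\mathbf{z},\mathbf{z}\rangle_2\le n^{-1/2}\widetilde{\underline k}_1\|\mathbf{z}\|_2^2$, with constants $0<\underline k_0<\widetilde{\underline k}_1<+\infty$ independent of $\mathbf{x}$; set $\underline k_1=n\,\widetilde{\underline k}_1$. $[\underline L(\mathbf{x})]$ is the upper triangular real matrix with $[\underline K(\mathbf{x})]=[\underline L(\mathbf{x})]^T[\underline L(\mathbf{x})]$. $\varepsilon>0$ is a fixed real number. *)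

(* Defs.v *)
From HB Require Import structures.
From mathcomp Require Import all_boot all_order all_algebra.
From mathcomp Require Import all_classical all_reals all_analysis.
Set Implicit Arguments. Unset Strict Implicit. Unset Printing Implicit Defensive.
Import Order.TTheory GRing.Theory Num.Theory numFieldNormedType.Exports.
Local Open Scope ring_scope.

Definition dotv (R : realType) (n : nat) (u v : 'cV[R]_n) : R :=
  \sum_(i < n) u i 0 * v i 0.

Definition norm2sq (R : realType) (n : nat) (z : 'cV[R]_n) : R := dotv z z.

Definition frob (R : realType) (m n : nat) (A : 'M[R]_(m, n)) : R :=
  Num.sqrt (\sum_(i < m) \sum_(j < n) A i j ^+ 2).

Definition spd (R : realType) (n : nat) (A : 'M[R]_n) : Prop :=
  A^T = A /\ forall z : 'cV[R]_n, z != 0 -> 0 < dotv (A *m z) z.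

Definition upper_trig (R : realType) (n : nat) (A : 'M[R]_n) : Prop :=
  forall i j : 'I_n, (j < i)%N -> A i j = 0.

Definition random_field_spd (R : realType) (d n : nat)
  (dT : measure_display) (T : measurableType dT)
  (D : set 'rV[R]_d) (K : 'rV[R]_d -> T -> 'M[R]_n) : Prop :=
  forall x, D x ->
    (forall i j : 'I_n, measurable_fun setT (fun th => K x th i j)) /\
    (forall th, spd (K x th)).

Definition Kfield (R : realType) (d n : nat) (T : Type) (eps : R)
  (L : 'rV[R]_d -> 'M[R]_n) (K0 : 'rV[R]_d -> T -> 'M[R]_n)
  (x : 'rV[R]_d) (th : T) : 'M[R]_n :=
  (1 + eps)^-1 *: ((L x)^T *m (eps%:M + K0 x th) *m L x).

(* Main.v *)
Require Import Defs.
From HB Require Import structures.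
From mathcomp Require Import all_boot all_order all_algebra.
From mathcomp Require Import all_classical all_reals all_analysis.
From mathcomp Require Import ring lra.
Import Order.TTheory GRing.Theory Num.Theory numFieldNormedType.Exports.

Module Helpers.
Local Open Scope ring_scope.
Set Implicit Arguments. Unset Strict Implicit. Unset Printing Implicit Defensive.

Section CS.
Variable R : realType.

Lemma cs_sum (I : finType) (a b : I -> R) :
  (\sum_i a i * b i) ^+ 2 <= (\sum_i a i ^+ 2) * (\sum_i b i ^+ 2).
Proof.
have H : 0 <= \sum_i \sum_j (a i * b j - a j * b i) ^+ 2.
  by apply: sumr_ge0 => i _; apply: sumr_ge0 => j _; exact: sqr_ge0.
have E : \sum_i \sum_j (a i * b j - a j * b i) ^+ 2 =
   2 * ((\sum_i a i ^+ 2) * (\sum_i b i ^+ 2) - (\sum_i a i * b i) ^+ 2).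
  have E1 : forall i j, (a i * b j - a j * b i) ^+ 2 =
      a i ^+ 2 * b j ^+ 2 + a j ^+ 2 * b i ^+ 2 - 2 * ((a i * b i) * (a j * b j)).
    by move=> i j; rewrite sqrrB !exprMn; ring.
  transitivity (\sum_i \sum_j (a i ^+ 2 * b j ^+ 2) + \sum_i \sum_j (a j ^+ 2 * b i ^+ 2)
     - 2 * \sum_i \sum_j ((a i * b i) * (a j * b j))).
    rewrite mulr_sumr -big_split -sumrB; apply: eq_bigr => i _ /=.
    by rewrite mulr_sumr -big_split -sumrB; apply: eq_bigr => j _; rewrite E1.
  rewrite [\sum_i \sum_j (a j ^+ 2 * _)]exchange_big /=.
  rewrite -!big_distrlr /= expr2; ring.
rewrite E pmulr_rge0 // in H; by rewrite -subr_ge0.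
Qed.

Lemma sqrt_leP (u v : R) : 0 <= v -> u <= v ^+ 2 -> Num.sqrt u <= v.
Proof.
move=> hv huv; rewrite -(ger0_norm hv) -sqrtr_sqr ler_sqrt //; exact: sqr_ge0.
Qed.

Definition fs (m k : nat) (A : 'M[R]_(m, k)) := \sum_(p : 'I_m * 'I_k) A p.1 p.2 ^+ 2.
Arguments fs {m k}.

Lemma frobE m k (A : 'M[R]_(m, k)) : frob A = Num.sqrt (fs A).
Proof. by rewrite /frob /fs pair_bigA. Qed.

Lemma fs_ge0 m k (A : 'M[R]_(m, k)) : 0 <= fs A.
Proof. by apply: sumr_ge0 => p _; exact: sqr_ge0. Qed.

Lemma frob_ge0 m k (A : 'M[R]_(m, k)) : 0 <= frob A.
Proof. by rewrite frobE sqrtr_ge0. Qed.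

Lemma frob_sqr m k (A : 'M[R]_(m, k)) : frob A ^+ 2 = fs A.
Proof. by rewrite frobE sqr_sqrtr // fs_ge0. Qed.

Lemma frob_add m k (A B : 'M[R]_(m, k)) : frob (A + B) <= frob A + frob B.
Proof.
rewrite [frob (A + B)]frobE; apply: sqrt_leP.
  by rewrite addr_ge0 // frob_ge0.
have Z : \sum_(p : 'I_m * 'I_k) A p.1 p.2 * B p.1 p.2 <= frob A * frob B.
  apply: le_trans (ler_norm _) _.
  rewrite -sqrtr_sqr !frobE -sqrtrM ?fs_ge0 // ler_sqrt; last first.
    by rewrite mulr_ge0 // fs_ge0.
  exact: cs_sum.
have -> : fs (A + B) = fs A + fs B + 2 * \sum_(p : 'I_m * 'I_k) A p.1 p.2 * B p.1 p.2.
  rewrite /fs mulr_sumr -!big_split /=; apply: eq_bigr => p _.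
  rewrite !mxE sqrrD; ring.
rewrite sqrrD -!frob_sqr.
have : 2 * (\sum_(p : 'I_m * 'I_k) A p.1 p.2 * B p.1 p.2) <= 2 * (frob A * frob B).
  by rewrite ler_pM2l.
rewrite mulr_natl mulr_natl mulr2n mulr2n; lra.
Qed.

Lemma frob_mul m k l (A : 'M[R]_(m, k)) (B : 'M[R]_(k, l)) :
  frob (A *m B) <= frob A * frob B.
Proof.
rewrite !frobE -sqrtrM ?fs_ge0 // ler_sqrt;
  last by rewrite mulr_ge0 // fs_ge0.
have -> : fs A * fs B = \sum_(p : 'I_m * 'I_l)
   (\sum_j A p.1 j ^+ 2) * (\sum_j B j p.2 ^+ 2).
  rewrite /fs -(pair_bigA _ (fun i j => A i j ^+ 2)) -(pair_bigA _ (fun i j => B i j ^+ 2)).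
  rewrite -(pair_bigA _ (fun i j => (\sum_k0 A i k0 ^+ 2) * (\sum_k0 B k0 j ^+ 2))).
  by rewrite [X in _ * X]exchange_big big_distrlr.
apply: ler_sum => p _; rewrite mxE; exact: cs_sum.
Qed.

Lemma frob_scale m k (c : R) (A : 'M[R]_(m, k)) : frob (c *: A) = `|c| * frob A.
Proof.
rewrite !frobE -sqrtr_sqr -sqrtrM ?sqr_ge0 //; congr Num.sqrt.
rewrite /fs mulr_sumr; apply: eq_bigr => p _; rewrite mxE exprMn //.
Qed.

Lemma frob_tr m k (A : 'M[R]_(m, k)) : frob A^T = frob A.
Proof.
rewrite /frob exchange_big /=; congr Num.sqrt.
by apply: eq_bigr => i _; apply: eq_bigr => j _; rewrite mxE.
Qed.

Lemma frob_id k : frob (1%:M : 'M[R]_k) = Num.sqrt (k%:R).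
Proof.
rewrite /frob; congr Num.sqrt.
transitivity (\sum_(i < k) (1:R)); last by rewrite sumr_const card_ord.
apply: eq_bigr => i _; rewrite (bigD1 i) //= big1 ?mxE ?eqxx ?addr0 ?expr1n //.
by move=> j /negbTE ji; rewrite mxE eq_sym ji /= expr0n.
Qed.

Section Dot.
Variable k : nat.
Implicit Types (u v w z : 'cV[R]_k) (A B : 'M[R]_k).

Lemma dotvE u v : dotv u v = (u^T *m v) 0 0.
Proof. by rewrite /dotv mxE; apply: eq_bigr => i _; rewrite mxE. Qed.

Lemma dotvC u v : dotv u v = dotv v u.
Proof. by rewrite /dotv; apply: eq_bigr => i _; rewrite mulrC. Qed.

Lemma dotv_mul A u v : dotv (A *m u) v = dotv u (A^T *m v).
Proof. by rewrite !dotvE trmx_mul mulmxA. Qed.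

Lemma dotvDl u w v : dotv (u + w) v = dotv u v + dotv w v.
Proof. by rewrite /dotv -big_split; apply: eq_bigr => i _; rewrite mxE mulrDl. Qed.

Lemma dotvZl c u v : dotv (c *: u) v = c * dotv u v.
Proof. by rewrite /dotv mulr_sumr; apply: eq_bigr => i _; rewrite mxE mulrA. Qed.

Lemma dotvDr u w v : dotv v (u + w) = dotv v u + dotv v w.
Proof. by rewrite dotvC dotvDl !(dotvC v). Qed.

Lemma dotvZr c u v : dotv v (c *: u) = c * dotv v u.
Proof. by rewrite dotvC dotvZl dotvC. Qed.

Lemma dotvNl u v : dotv (- u) v = - dotv u v.
Proof. by rewrite -scaleN1r dotvZl mulN1r. Qed.

Lemma dotvNr u v : dotv v (- u) = - dotv v u.
Proof. by rewrite dotvC dotvNl dotvC. Qed.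

Lemma norm2sq_ge0 u : 0 <= norm2sq u.
Proof. by apply: sumr_ge0 => i _; rewrite -expr2 sqr_ge0. Qed.

Lemma norm2sq_eq0 u : norm2sq u = 0 -> u = 0.
Proof.
move=> h; apply/matrixP => i j; rewrite (ord1 j) mxE.
have hp : forall l : 'I_k, predT l -> 0 <= u l 0 * u l 0.
  by move=> l _; rewrite -expr2 sqr_ge0.
have /eqP := @psumr_eq0P _ _ predT (fun i => u i 0 * u i 0) hp h i isT.
by rewrite mulf_eq0 orbb => /eqP.
Qed.

Lemma norm2sq_gt0 u : u != 0 -> 0 < norm2sq u.
Proof.
move=> uz; rewrite lt_neqAle norm2sq_ge0 andbT eq_sym.
by apply/eqP => /norm2sq_eq0 h; rewrite h eqxx in uz.
Qed.

Definition ev (i : 'I_k) : 'cV[R]_k := delta_mx i 0.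

Lemma dotv_ev u i : dotv u (ev i) = u i 0.
Proof.
rewrite /dotv (bigD1 i) //= big1 ?addr0; first by rewrite mxE !eqxx mulr1.
by move=> j /negbTE ji; rewrite mxE ji mulr0.
Qed.

Lemma mul_ev A i j : (A *m ev i) j 0 = A j i.
Proof. by rewrite -colE mxE. Qed.

Lemma dotv_Aev A i j : dotv (A *m ev i) (ev j) = A j i.
Proof. by rewrite dotv_ev mul_ev. Qed.

Lemma norm2sq_ev i : norm2sq (ev i) = 1.
Proof. by rewrite /norm2sq dotv_ev mxE !eqxx. Qed.

Lemma ev_neq0 i : ev i != 0.
Proof.
apply/negP => /eqP h.
have : (ev i) i 0 = 1 by rewrite mxE !eqxx.
by rewrite h mxE => /esym/eqP; rewrite oner_eq0.
Qed.

Lemma spd_ge0 A z : spd A -> 0 <= dotv (A *m z) z.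
Proof.
move=> [_ hA]; have [->|nz] := eqVneq z 0.
  by rewrite mulmx0 /dotv big1 // => i _; rewrite mxE mul0r.
exact/ltW/hA.
Qed.

Lemma spd_entry A i j : spd A -> A i j ^+ 2 <= A i i * A j j.
Proof.
move=> hA; have hAi : 0 < A i i by rewrite -dotv_Aev; apply: hA.2; exact: ev_neq0.
have sym : A j i = A i j by rewrite -[in LHS](proj1 hA) mxE.
pose t := - A i j / A i i.
have := @spd_ge0 A (t *: ev i + ev j) hA.
rewrite mulmxDr -scalemxAr !(dotvDl, dotvDr, dotvZl, dotvZr) !dotv_Aev sym.
have E : A i i * (t * (t * A i i) + t * A i j + (t * A i j + A j j))
   = A i i * A j j - A i j ^+ 2.
  rewrite /t; field; by rewrite lt0r_neq0.
move=> h; rewrite -subr_ge0 -E; exact: mulr_ge0 (ltW hAi) h.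
Qed.

Lemma spd_frob A : spd A -> frob A <= \tr A.
Proof.
move=> hA; rewrite frobE; apply: sqrt_leP.
  by apply: sumr_ge0 => i _; rewrite -dotv_Aev; apply: spd_ge0.
rewrite /fs /mxtrace expr2 big_distrlr /= pair_bigA /=.
by apply: ler_sum => p _; exact: spd_entry.
Qed.
End Dot.

Lemma pd_unit k (A : 'M[R]_k) :
  (forall z : 'cV[R]_k, z != 0 -> 0 < dotv (A *m z) z) -> A \in unitmx.
Proof.
move=> hA; rewrite unitmxE unitfE; apply/negP => /det0P [v vn0 vA].
have zn0 : v^T != 0 by rewrite trmx_eq0.
have := hA _ zn0; rewrite dotv_mul -trmx_mul vA trmx0.
by rewrite /dotv big1 ?ltxx // => i _; rewrite !mxE mulr0.
Qed.

Section Main.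
Variables (k : nat) (Kb L K0 : 'M[R]_k) (k0 k1t eps : R).
Hypothesis hk : (1 <= k)%N.
Hypothesis hk0 : 0 < k0.
Hypothesis hk1t : 0 < k1t.
Hypothesis hKb : forall z : 'cV[R]_k, k0 * norm2sq z <= dotv (Kb *m z) z /\
     dotv (Kb *m z) z <= (Num.sqrt (k%:R))^-1 * k1t * norm2sq z.
Hypothesis hL : Kb = L^T *m L.
Hypothesis heps : 0 < eps.
Hypothesis hK0 : spd K0.

Let c := (1 + eps)^-1.
Let K := c *: (L^T *m (eps%:M + K0) *m L).

Lemma c_gt0 : 0 < c.
Proof. by rewrite /c invr_gt0 addr_gt0. Qed.

Lemma dotvL z : dotv (L *m z) (L *m z) = dotv (Kb *m z) z.
Proof. by rewrite dotv_mul dotvC hL mulmxA. Qed.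

Lemma quadK z : dotv (K *m z) z =
   c * (eps * dotv (Kb *m z) z + dotv (K0 *m (L *m z)) (L *m z)).
Proof.
rewrite /K -scalemxAl dotvZl; congr (_ * _).
rewrite -!mulmxA [LHS]dotv_mul trmxK mulmxDl mul_scalar_mx dotvDl dotvZl dotvL //.
Qed.

Lemma sqrtk_ge1 : 1 <= Num.sqrt (k%:R) :> R.
Proof.
have : Num.sqrt 1 <= Num.sqrt (k%:R) :> R by rewrite ler_sqrt ?ler0n // ler1n.
by rewrite sqrtr1.
Qed.

Lemma trKb : \tr Kb <= k%:R * k1t.
Proof.
apply: (@le_trans _ _ (\sum_(i < k) (Num.sqrt (k%:R))^-1 * k1t)).
  apply: ler_sum => i _; rewrite -dotv_Aev.
  by have [_ h] := hKb (ev i); rewrite norm2sq_ev mulr1 in h.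
rewrite sumr_const card_ord -[X in X <= _]mulr_natl mulrA ler_pM2r //.
rewrite -[X in _ <= X]mulr1 ler_pM2l ?ltr0n //.
rewrite invr_le1 ?sqrtk_ge1 // ?unitfE ?sqrtr_ge0 //.
all: try by apply: lt0r_neq0; apply: lt_le_trans ltr01 sqrtk_ge1.
by apply: lt_le_trans ltr01 sqrtk_ge1.
Qed.

Lemma fsL : fs L = \tr Kb.
Proof.
rewrite /fs /mxtrace hL -(pair_bigA _ (fun i j => L i j ^+ 2)) exchange_big /=.
by apply: eq_bigr => i _; rewrite mxE; apply: eq_bigr => j _; rewrite mxE expr2.
Qed.

Lemma part1 : frob K <= k%:R * k1t / (1 + eps) * (Num.sqrt (k%:R) * eps + frob K0).
Proof.
have hc := c_gt0.
rewrite /K frob_scale gtr0_norm //.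
have h1 : frob (L^T *m (eps%:M + K0) *m L) <= fs L * (Num.sqrt (k%:R) * eps + frob K0).
  apply: le_trans (frob_mul _ _) _.
  have hX : frob (eps%:M + K0) <= Num.sqrt (k%:R) * eps + frob K0.
    apply: le_trans (frob_add _ _) _; rewrite -[eps%:M]mulmx1 mul_scalar_mx frob_scale.
    by rewrite frob_id gtr0_norm // mulrC.
  have hM : frob (L^T *m (eps%:M + K0)) <= frob L * (Num.sqrt (k%:R) * eps + frob K0).
    apply: le_trans (frob_mul _ _) _; rewrite frob_tr.
    by apply: ler_wpM2l; rewrite ?frob_ge0.
  apply: le_trans (ler_wpM2r (frob_ge0 L) hM) _.
  by rewrite -frob_sqr expr2 mulrAC.
have -> : k%:R * k1t / (1 + eps) * (Num.sqrt (k%:R) * eps + frob K0)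
   = c * (k%:R * k1t * (Num.sqrt (k%:R) * eps + frob K0)) by rewrite mulrAC mulrC.
rewrite ler_pM2l //.
apply: le_trans h1 _; apply: ler_pM; rewrite ?fs_ge0 ?addr_ge0 ?frob_ge0 //.
  by rewrite mulr_ge0 ?sqrtr_ge0 // ltW.
by rewrite fsL trKb.
Qed.

Lemma part2 z : k0 * eps / (1 + eps) * norm2sq z <= dotv (K *m z) z.
Proof.
have hc := c_gt0.
rewrite quadK.
have -> : k0 * eps / (1 + eps) * norm2sq z = c * (eps * (k0 * norm2sq z)) by rewrite /c; ring.
rewrite ler_pM2l //.
have h0 := @spd_ge0 _ K0 (L *m z) hK0.
have [h1 _] := hKb z.
have := ler_wpM2l (ltW heps) h1; lra.
Qed.

Lemma K_pd z : z != 0 -> 0 < dotv (K *m z) z.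
Proof.
move=> nz; apply: lt_le_trans (part2 z).
by rewrite mulr_gt0 ?norm2sq_gt0 // divr_gt0 ?mulr_gt0 ?addr_gt0.
Qed.

Lemma Kb_pd z : z != 0 -> 0 < dotv (Kb *m z) z.
Proof.
move=> nz; apply: lt_le_trans (proj1 (hKb z)).
by rewrite mulr_gt0 ?norm2sq_gt0.
Qed.

Lemma K_unit : K \in unitmx.
Proof. exact: pd_unit K_pd. Qed.

Lemma Kb_unit : Kb \in unitmx.
Proof. exact: pd_unit Kb_pd. Qed.

Lemma K_sym : K^T = K.
Proof.
rewrite /K linearZ /= !trmx_mul trmxK linearD /= tr_scalar_mx (proj1 hK0).
by rewrite mulmxA.
Qed.

Lemma Kb_sym : Kb^T = Kb.
Proof. by rewrite hL trmx_mul trmxK. Qed.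

Lemma inv_spd (A : 'M[R]_k) : A^T = A -> A \in unitmx ->
  (forall z, z != 0 -> 0 < dotv (A *m z) z) -> spd (invmx A).
Proof.
move=> hs hu hp; split; first by rewrite trmx_inv hs.
move=> z nz; set w := invmx A *m z.
have zE : z = A *m w by rewrite /w mulmxA mulmxV // mul1mx.
have wn0 : w != 0 by apply: contraNneq nz => w0; rewrite zE w0 mulmx0.
by rewrite [X in dotv _ X]zE dotvC; apply: hp.
Qed.

Lemma key z : dotv (invmx K *m z) z <= (1 + eps) / eps * dotv (invmx Kb *m z) z.
Proof.
set u := invmx K *m z; set v := invmx Kb *m z.
have zK : z = K *m u by rewrite /u mulmxA mulmxV ?K_unit // mul1mx.
have zKb : z = Kb *m v by rewrite /v mulmxA mulmxV ?Kb_unit // mul1mx.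
have Eab : dotv (L *m u) (L *m v) = dotv u z.
  by rewrite dotv_mul mulmxA -hL -zKb.
have Eb : dotv (L *m v) (L *m v) = dotv v z.
  by rewrite dotv_mul mulmxA -hL -zKb.
have Ea : dotv (L *m u) (L *m u) = dotv (Kb *m u) u by rewrite dotvL.
have Hx : eps * c * dotv (Kb *m u) u <= dotv u z.
  rewrite [X in dotv u X]zK [dotv u _]dotvC quadK [eps * c]mulrC -mulrA ler_pM2l ?c_gt0 //.
  have := @spd_ge0 _ K0 (L *m u) hK0; lra.
set lam := eps * c.
have hlam : 0 < lam by rewrite mulr_gt0 ?c_gt0.
have Hq : 0 <= norm2sq (lam *: (L *m u) - L *m v) by apply: norm2sq_ge0.
rewrite /norm2sq !(dotvDl, dotvDr, dotvZl, dotvZr, dotvNl, dotvNr) in Hq.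
rewrite [dotv (L *m v) (L *m u)]dotvC Eab Eb Ea in Hq.
have H2 := ler_wpM2l (ltW hlam) Hx.
have E : lam * ((1 + eps) / eps) = 1.
  rewrite /lam /c; field; apply/andP; split; apply: lt0r_neq0 => //.
  by rewrite addr_gt0.
rewrite -(ler_pM2l hlam) mulrA E mul1r.
rewrite -/lam in H2; nra.
Qed.
Lemma part3 : frob (invmx K) <= Num.sqrt (k%:R) * (1 + eps) / eps * \tr (invmx Kb).
Proof.
have hB := inv_spd K_sym K_unit K_pd.
apply: le_trans (spd_frob hB) _.
have trle : \tr (invmx K) <= (1 + eps) / eps * \tr (invmx Kb).
  rewrite /mxtrace mulr_sumr; apply: ler_sum => i _; rewrite -!dotv_Aev; exact: key.
have hBb := inv_spd Kb_sym Kb_unit Kb_pd.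
have tr0 : 0 <= \tr (invmx Kb).
  by apply: sumr_ge0 => i _; rewrite -dotv_Aev; apply: spd_ge0.
apply: le_trans trle _.
have hp : 0 <= (1 + eps) / eps * \tr (invmx Kb).
  by rewrite mulr_ge0 // divr_ge0 // ltW // addr_gt0.
have -> : Num.sqrt (k%:R) * (1 + eps) / eps * \tr (invmx Kb)
   = Num.sqrt (k%:R) * ((1 + eps) / eps * \tr (invmx Kb)) by rewrite !mulrA.
rewrite -[X in X <= _]mul1r; apply: ler_wpM2r => //. exact: sqrtk_ge1.
Qed.

Lemma invK_spd : spd (invmx K).
Proof. exact: inv_spd K_sym K_unit K_pd. Qed.
End Main.
End CS.

Local Open Scope ring_scope.
Local Open Scope classical_set_scope.
Set Implicit Arguments. Unset Strict Implicit. Unset Printing Implicit Defensive.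

Lemma meas_inv (R : realType) : measurable_fun [set: R] (@GRing.inv R).
Proof.
have -> : (@GRing.inv R) = fun x : R => if x == 0 then 0 else x^-1.
  by apply/funext => x; case: eqP => // ->; rewrite invr0.
apply: measurable_fun_if => //.
- by apply: measurable_realfun.measurable_fun_eqr => //; exact: measurable_cst.
have -> : [set: R] `&` (fun x : R => x == 0) @^-1` [set false] = [set x : R | x != 0].
  by apply/seteqP; split => x /=; [case => _ /negbT|move=> /negbTE h; split].
apply: measurable_realfun.open_continuous_measurable_fun; first exact: open_neq.
by move=> x; rewrite inE => /= hx; exact: inv_continuous.
Qed.

Section MM.
Context d (T : measurableType d) (R : realType).

Definition mmeas m l (M : T -> 'M[R]_(m, l)) :=
  forall i j, measurable_fun [set: T] (fun t => M t i j).

Lemma mmeas_cst m l (A : 'M[R]_(m, l)) : mmeas (fun _ => A).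
Proof. by move=> i j; exact: measurable_cst. Qed.

Lemma mmeas_add m l (M N : T -> 'M[R]_(m, l)) :
  mmeas M -> mmeas N -> mmeas (fun t => M t + N t).
Proof.
move=> hM hN i j; under eq_fun do rewrite mxE.
exact: measurable_realfun.measurable_funD.
Qed.

Lemma mmeas_mul m l p (M : T -> 'M[R]_(m, l)) (N : T -> 'M[R]_(l, p)) :
  mmeas M -> mmeas N -> mmeas (fun t => M t *m N t).
Proof.
move=> hM hN i j; under eq_fun do rewrite mxE.
apply: measurable_sum => k; exact: measurable_realfun.measurable_funM.
Qed.

Lemma mmeas_scale m l (c : R) (M : T -> 'M[R]_(m, l)) :
  mmeas M -> mmeas (fun t => c *: M t).
Proof.
move=> hM i j; under eq_fun do rewrite mxE.
by apply: measurable_realfun.measurable_funM => //; exact: measurable_cst.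
Qed.

Lemma meas_det k (M : T -> 'M[R]_k) :
  mmeas M -> measurable_fun [set: T] (fun t => \det (M t)).
Proof.
move=> hM; apply: measurable_sum => s.
apply: measurable_realfun.measurable_funM; first exact: measurable_cst.
by apply: measurable_prod => i _; exact: hM.
Qed.

Lemma mmeas_adj k (M : T -> 'M[R]_k) : mmeas M -> mmeas (fun t => \adj (M t)).
Proof.
move=> hM i j; under eq_fun do rewrite mxE.
apply: measurable_realfun.measurable_funM; first exact: measurable_cst.
by apply: meas_det => a b; under eq_fun do rewrite !mxE; exact: hM.
Qed.

Lemma mmeas_inv k (M : T -> 'M[R]_k) : mmeas M -> (forall t, M t \in unitmx) ->
  mmeas (fun t => invmx (M t)).
Proof.
move=> hM hu.
have -> : (fun t => invmx (M t)) = fun t => (\det (M t))^-1 *: \adj (M t).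
  by apply/funext => t; rewrite /invmx hu.
move=> i j; under eq_fun do rewrite mxE.
apply: measurable_realfun.measurable_funM; last exact: mmeas_adj.
by apply: measurableT_comp; [exact: meas_inv | exact: meas_det].
Qed.
End MM.

End Helpers.
Import Helpers.
Unset Implicit Arguments.
Set Strict Implicit.
Local Open Scope ring_scope.

Theorem lemma1 (R : realType) (d n : nat) (D : set 'rV[R]_d)
  (dT : measure_display) (T : measurableType dT) (P : probability T R)
  (Kbar L : 'rV[R]_d -> 'M[R]_n) (k0 k1t eps : R)
  (K0 : 'rV[R]_d -> T -> 'M[R]_n) :
  (1 <= d)%N -> (1 <= n)%N ->
  open D -> bounded_set D ->
  (forall x, D x -> spd (Kbar x)) ->
  0 < k0 -> k0 < k1t ->
  (forall x (z : 'cV[R]_n), D x ->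
     k0 * norm2sq z <= dotv (Kbar x *m z) z /\
     dotv (Kbar x *m z) z <= (Num.sqrt (n%:R))^-1 * k1t * norm2sq z) ->
  (forall x, D x ->
     upper_trig (L x) /\ (forall i, 0 < L x i i) /\ Kbar x = (L x)^T *m L x) ->
  0 < eps ->
  random_field_spd D K0 ->
  let k1 := n%:R * k1t in
  let K := Kfield eps L K0 in
  (* (i) *)
  (forall x, D x ->
     {ae P, forall th, frob (K x th) <=
        k1 / (1 + eps) * (Num.sqrt (n%:R) * eps + frob (K0 x th))}) /\
  (* (ii) *)
  (let keps := k0 * eps / (1 + eps) in
   0 < keps /\
   forall (z : 'cV[R]_n) x, D x ->
     {ae P, forall th, keps * norm2sq z <= dotv (K x th *m z) z}) /\
  (* (iii) *)
  (forall x, D x ->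
     {ae P, forall th, frob (invmx (K x th)) <=
        Num.sqrt (n%:R) * (1 + eps) / eps * \tr (invmx (Kbar x))}) /\
  (forall (p : nat) x, (1 <= p)%N -> D x ->
     P.-integrable setT (fun th => ((frob (invmx (K x th))) ^+ p)%:E)).
Proof.
move=> _ hn _ _ _ hk0 hk01 hKb hL heps hRF k1 K.
have hk1t : 0 < k1t by apply: lt_trans hk01.
split.
  move=> x Dx; apply: aeW => th.
  have [_ [_ hLx]] := hL x Dx.
  exact: (part1 (K0 x th) hn hk1t (hKb x ^~ Dx) hLx heps).
split.
  split; first by rewrite divr_gt0 ?mulr_gt0 ?addr_gt0.
  move=> z x Dx; apply: aeW => th.
  have [_ [_ hLx]] := hL x Dx.
  exact: (part2 (hKb x ^~ Dx) hLx heps ((hRF x Dx).2 th) z).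
have h3 : forall x, D x -> forall th, frob (invmx (K x th)) <=
        Num.sqrt (n%:R) * (1 + eps) / eps * \tr (invmx (Kbar x)).
  move=> x Dx th; have [_ [_ hLx]] := hL x Dx.
  exact: (part3 hn hk0 (hKb x ^~ Dx) hLx heps ((hRF x Dx).2 th)).
split; first by move=> x Dx; apply: aeW => th; exact: h3.
move=> p x hp Dx.
have [_ [_ hLx]] := hL x Dx.
set C := Num.sqrt (n%:R) * (1 + eps) / eps * \tr (invmx (Kbar x)).
have hu : forall th, K x th \in unitmx.
  move=> th; exact: (K_unit hk0 (hKb x ^~ Dx) hLx heps ((hRF x Dx).2 th)).
have mK : mmeas (K x).
  apply: mmeas_scale; apply: mmeas_mul; last exact: mmeas_cst.
  apply: mmeas_mul; first exact: mmeas_cst.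
  apply: mmeas_add; first exact: mmeas_cst.
  exact: (hRF x Dx).1.
have mI := mmeas_inv mK hu.
apply: measurable_bounded_integrable => //.
- apply: (@le_lt_trans _ _ 1%E); first exact: probability_le1.
  exact: ltey.
- apply: measurable_realfun.measurable_funX.
  rewrite /frob.
  apply: (measurableT_comp (f := @Num.sqrt R)); first exact: (measurable_realfun.continuous_measurable_fun (@sqrt_continuous R)).
  apply: measurable_sum => i; apply: measurable_sum => j.
  apply: measurable_realfun.measurable_funX; exact: mI.
- have C0 : 0 <= C by apply: le_trans (h3 x Dx (point : T)); rewrite frob_ge0.
  rewrite /bounded_near; near=> M => th _ /=.
  rewrite ger0_norm ?exprn_ge0 ?frob_ge0 //.
  apply: le_trans (lerXn2r p _ _ (h3 x Dx th)) _.
  + by rewrite nnegrE frob_ge0.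
  + by rewrite nnegrE.
  near: M; apply: nbhs_pinfty_ge; exact: num_real.
Unshelve. all: end_near.
Qed.
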